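(* In the general framework (continuous $f_{l,n}:\Omega\to\mathbb R^d$, $l=1,\ldots,R_n$, $Y_n(\omega)=\{f_{l,n}(\omega)\}_l$), let $\omega\in\Omega$ and suppose that for some $s>0$, $\liminf_{n\to\infty}T(Y_n(\omega),sR_n^{-1/d})/R_n=0$. Then there exists $h:\mathbb N\to[0,\infty)$ with $\sum_nh(n)=\infty$ such that $\{x\in\mathbb R^d:x\in\bigcup_{l=1}^{R_n}B(f_{l,n}(\omega),(h(n)/R_n)^{1/d})$ for infinitely many $n\}$ has zero Lebesgue measure.
   Context: $T(Y,r)$ = maximal cardinality of an $r$-separated subset (distinct points at distance $>r$) of a finite set $Y$; $B(x,r)$ closed ball. *)

(* Defs.v *)
From Stdlib Require Import Reals Lra List.
Import ListNotations.
Open Scope R_scope.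

(* Points of R^d are represented as functions nat -> R; only the
   coordinates 0..d-1 are ever inspected. *)
Definition pt := nat -> R.

Fixpoint sumsq (d : nat) (x y : pt) : R :=
  match d with
  | O => 0
  | S k => sumsq k x y + (x k - y k) * (x k - y k)
  end.

Definition dist (d : nat) (x y : pt) : R := sqrt (sumsq d x y).

Definition ball (d : nat) (c : pt) (r : R) (x : pt) : Prop := dist d x c <= r.

Fixpoint sublists {A : Type} (l : list A) : list (list A) :=
  match l with
  | [] => [[]]
  | x :: xs => let s := sublists xs in map (cons x) s ++ s
  end.

Fixpoint separatedb (d : nat) (r : R) (l : list pt) : bool :=
  match l with
  | [] => true
  | x :: xs =>
      forallb (fun y => if Rlt_dec r (dist d x y) then true else false) xs
      && separatedb d r xs
  end.

(* T(Y, r): maximal cardinality of an r-separated subset of the finite set Y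
   (Y given as a list; for r >= 0 duplicates in Y are irrelevant). *)
Definition Tsep (d : nat) (Y : list pt) (r : R) : nat :=
  fold_right Nat.max 0%nat
    (map (@length pt) (filter (separatedb d r) (sublists Y))).

Definition Yn {Omega : Type} (f : nat -> nat -> Omega -> pt) (Rn : nat -> nat)
  (n : nat) (w : Omega) : list pt :=
  map (fun l => f l n w) (seq 1 (Rn n)).

(* liminf_{n -> oo} u n = 0 for a nonnegative real sequence *)
Definition liminf_zero (u : nat -> R) : Prop :=
  forall eps, 0 < eps -> forall N, exists n, (N <= n)%nat /\ u n < eps.

Definition series_diverges (h : nat -> R) : Prop :=
  forall M, exists N, M < sum_f_R0 h N.

Definition droot (d : nat) (x : R) : R :=
  if Rle_dec x 0 then 0 else Rpower x (1 / INR d).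

Fixpoint prod_upto (d : nat) (g : nat -> R) : R :=
  match d with
  | O => 1
  | S k => prod_upto k g * g k
  end.

Definition lebesgue_null (d : nat) (E : pt -> Prop) : Prop :=
  forall eps, 0 < eps ->
  exists a b : nat -> pt,
    (forall k i, (i < d)%nat -> a k i <= b k i) /\
    (forall N, sum_f_R0 (fun k => prod_upto d (fun i => b k i - a k i)) N <= eps) /\
    (forall x, E x -> exists k, forall i, (i < d)%nat -> a k i <= x i <= b k i).

(* Main.v *)
Require Import Defs.
From Stdlib Require Import Reals Lra Lia List Classical ClassicalEpsilon.
Import ListNotations.
Open Scope R_scope.

Lemma sumsq_nonneg d x y : 0 <= sumsq d x y.
Proof. induction d; simpl; [lra|]. pose proof (Rle_0_sqr (x d - y d)); unfold Rsqr in *; lra. Qed.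

Lemma sumsq_ge d x y i : (i < d)%nat -> (x i - y i) * (x i - y i) <= sumsq d x y.
Proof.
  induction d; intros H; [lia|]. simpl.
  destruct (Nat.eq_dec i d) as [->|Hn].
  - pose proof (sumsq_nonneg d x y); lra.
  - pose proof (Rle_0_sqr (x d - y d)); unfold Rsqr in *. assert (i < d)%nat by lia. specialize (IHd H1); lra.
Qed.

Lemma dist_coord d x y r i : (i < d)%nat -> Defs.dist d x y <= r -> Rabs (x i - y i) <= r.
Proof.
  intros Hi H. unfold Defs.dist in H. rewrite <- sqrt_Rsqr_abs.
  eapply Rle_trans; [|exact H]. apply sqrt_le_1_alt. unfold Rsqr. apply sumsq_ge; auto.
Qed.

Lemma dist_self d x : Defs.dist d x x = 0.
Proof.
  unfold Defs.dist. replace (sumsq d x x) with 0. apply sqrt_0.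
  induction d; simpl; auto. rewrite <- IHd. ring.
Qed.

Lemma prod_upto_const d g c : (forall i, g i = c) -> prod_upto d g = c ^ d.
Proof. intros H; induction d; simpl; auto. rewrite IHd, H. ring. Qed.

Lemma prod_upto_nonneg d g : (forall i, (i < d)%nat -> 0 <= g i) -> 0 <= prod_upto d g.
Proof.
  induction d; simpl; intros H; [lra|]. apply Rmult_le_pos; auto.
Qed.

Definition box := (pt * pt)%type.
Definition vol d (b : box) := prod_upto d (fun i => snd b i - fst b i).
Definition inbox d (b : box) (x : pt) := forall i, (i < d)%nat -> fst b i <= x i <= snd b i.
Definition wf d (b : box) := forall i, (i < d)%nat -> fst b i <= snd b i.
Fixpoint volL d (l : list box) := match l with [] => 0 | b :: l => vol d b + volL d l end.
Definition pad : box := (fun _ => 0, fun _ => 0).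

Lemma vol_nonneg d b : wf d b -> 0 <= vol d b.
Proof. intros H. apply prod_upto_nonneg. intros i Hi. specialize (H i Hi). lra. Qed.

Lemma vol_pad d : (0 < d)%nat -> vol d pad = 0.
Proof. intros. unfold vol. rewrite (prod_upto_const d _ 0). apply pow_i; auto. intros; simpl; ring. Qed.

Lemma volL_app d l1 l2 : volL d (l1 ++ l2) = volL d l1 + volL d l2.
Proof. induction l1; simpl; [ring|]. rewrite IHl1; ring. Qed.

Lemma volL_nonneg d l : (forall b, In b l -> wf d b) -> 0 <= volL d l.
Proof.
  induction l; simpl; intros H; [lra|]. pose proof (vol_nonneg d a (H a (or_introl eq_refl))).
  assert (0 <= volL d l) by auto. lra.
Qed.

Lemma sum_zero N : sum_f_R0 (fun _ => 0) N = 0.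
Proof. induction N; simpl; auto. rewrite IHN; ring. Qed.

Lemma sum_ext f g N : (forall i, f i = g i) -> sum_f_R0 f N = sum_f_R0 g N.
Proof. intros H; induction N; simpl; auto. rewrite IHN, H; auto. Qed.

Lemma sum_nth_le d L N : (0 < d)%nat -> (forall b, In b L -> wf d b) ->
  sum_f_R0 (fun p => vol d (nth p L pad)) N <= volL d L.
Proof.
  intros Hd. revert N. induction L as [|b L IH]; intros N H.
  - simpl. rewrite (sum_ext _ (fun _ => 0)). rewrite sum_zero; lra.
    intros i; destruct i; apply vol_pad; auto.
  - simpl volL. assert (Hb : 0 <= vol d b) by (apply vol_nonneg; apply H; left; auto).
    assert (HL : forall b0, In b0 L -> wf d b0) by (intros; apply H; right; auto).
    destruct N.
    + simpl. pose proof (volL_nonneg d L HL); lra.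
    + rewrite decomp_sum by lia. simpl nth. simpl Nat.pred. specialize (IH N HL). lra.
Qed.

Section Cat.
Variable B : nat -> list box.
Fixpoint catB m := match m with O => pad :: B O | S m => catB m ++ (pad :: B (S m)) end.

Lemma len_catB m : (m < length (catB m))%nat.
Proof. induction m; simpl; [lia|]. rewrite length_app; simpl; lia. Qed.

Lemma catB_prefix m m' : (m <= m')%nat -> exists t, catB m' = catB m ++ t.
Proof.
  induction 1. exists []; rewrite app_nil_r; auto.
  destruct IHle as [t Ht]. exists (t ++ pad :: B (S m0)). simpl. rewrite Ht, app_assoc; auto.
Qed.

Lemma nth_stable p m m' : (p < length (catB m))%nat -> (m <= m')%nat ->
  nth p (catB m') pad = nth p (catB m) pad.
Proof. intros Hp Hm. destruct (catB_prefix m m' Hm) as [t ->]. apply app_nth1; auto. Qed.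

Definition Fb p := nth p (catB p) pad.

Lemma Fb_any p m : (p < length (catB m))%nat -> Fb p = nth p (catB m) pad.
Proof.
  intros Hp. unfold Fb. destruct (Nat.le_ge_cases p m).
  - symmetry. apply nth_stable; auto. apply len_catB.
  - apply nth_stable; auto.
Qed.

Lemma catB_wf d m : (forall j b, In b (B j) -> wf d b) -> forall b, In b (catB m) -> wf d b.
Proof.
  intros H. assert (Hp : wf d pad) by (intros i _; simpl; lra).
  induction m; simpl; intros b Hb.
  - destruct Hb as [<-|Hb]; eauto.
  - apply in_app_or in Hb. destruct Hb as [Hb|[<-|Hb]]; eauto.
Qed.

Lemma in_catB j b : In b (B j) -> exists p, Fb p = b.
Proof.
  intros Hb. assert (In b (catB j)).
  { destruct j; simpl; auto. apply in_or_app; right; right; auto. }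
  destruct (In_nth _ _ pad H) as [p [Hp Hn]]. exists p. rewrite (Fb_any p j Hp); auto.
Qed.

Lemma volL_catB d m : (0 < d)%nat -> volL d (catB m) = sum_f_R0 (fun k => volL d (B k)) m.
Proof.
  intros Hd. induction m; simpl; rewrite ?vol_pad by auto; [ring|]. rewrite volL_app, IHm. simpl. rewrite vol_pad by auto. ring.
Qed.
End Cat.

Lemma sum_ext_le f g N : (forall i, (i <= N)%nat -> f i = g i) -> sum_f_R0 f N = sum_f_R0 g N.
Proof. intros H. apply Rle_antisym; apply sum_Rle; intros; rewrite H; auto; lra. Qed.

Lemma cover d B (v : nat -> R) (E : pt -> Prop) eps : (0 < d)%nat ->
  (forall j b, In b (B j) -> wf d b) -> (forall k, volL d (B k) <= v k) ->
  (forall N, sum_f_R0 v N <= eps) ->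
  (forall x, E x -> exists j b, In b (B j) /\ inbox d b x) ->
  exists a b : nat -> pt,
    (forall k i, (i < d)%nat -> a k i <= b k i) /\
    (forall N, sum_f_R0 (fun k => prod_upto d (fun i => b k i - a k i)) N <= eps) /\
    (forall x, E x -> exists k, forall i, (i < d)%nat -> a k i <= x i <= b k i).
Proof.
  intros Hd Hwf Hv Hs HE.
  exists (fun k => fst (Fb B k)), (fun k => snd (Fb B k)). split; [|split].
  - intros k i Hi. apply (catB_wf B d k Hwf); auto. unfold Fb. apply nth_In, len_catB.
  - intros N. rewrite (sum_ext_le _ (fun p => vol d (nth p (catB B N) pad))).
    + eapply Rle_trans. apply sum_nth_le; auto. apply catB_wf; auto.
      rewrite volL_catB by auto. eapply Rle_trans; [|apply (Hs N)]. apply sum_Rle; auto.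
    + intros i Hi. unfold vol. rewrite (Fb_any B i N); auto. pose proof (len_catB B N). lia.
  - intros x Hx. destruct (HE x Hx) as [j [b [Hb Hin]]]. destruct (in_catB B j b Hb) as [p Hp].
    exists p. rewrite Hp. auto.
Qed.

Definition sepf d r (x y : pt) := if Rlt_dec r (Defs.dist d x y) then true else false.
Fixpoint greedy d r (L : list pt) : list pt :=
  match L with [] => [] | x :: xs =>
    let S := greedy d r xs in if forallb (sepf d r x) S then x :: S else S end.

Lemma greedy_sub d r L : In (greedy d r L) (sublists L).
Proof.
  induction L; simpl; auto. destruct forallb; apply in_or_app; [left; apply in_map|right]; auto.
Qed.

Lemma greedy_sep d r L : separatedb d r (greedy d r L) = true.
Proof.
  induction L; simpl; auto. destruct (forallb (sepf d r a) (greedy d r L)) eqn:E; auto.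
  simpl. unfold sepf in E. rewrite E, IHL; auto.
Qed.

Lemma forallb_false {A} (p : A -> bool) l : forallb p l = false -> exists y, In y l /\ p y = false.
Proof.
  induction l; simpl; intros H; [discriminate|]. destruct (p a) eqn:E.
  - destruct (IHl H) as [y [? ?]]; eauto.
  - eauto.
Qed.

Lemma greedy_cover d r L x : 0 <= r -> In x L -> exists y, In y (greedy d r L) /\ Defs.dist d x y <= r.
Proof.
  intros Hr. induction L; simpl; [tauto|]. intros [<-|H].
  - destruct (forallb (sepf d r a) (greedy d r L)) eqn:E.
    + exists a; split; [left; auto|]. rewrite dist_self; auto.
    + destruct (forallb_false _ _ E) as [y [Hy Hp]]. exists y; split; auto.
      unfold sepf in Hp. destruct Rlt_dec; [discriminate|lra].
  - destruct (IHL H) as [y [Hy Hd]]. exists y; split; auto. destruct forallb; simpl; auto.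
Qed.

Lemma fold_max_ge {A} (F : A -> nat) l a : In a l -> (F a <= fold_right Nat.max 0 (map F l))%nat.
Proof. induction l; simpl; [tauto|]. intros [->|H]; [lia|]. specialize (IHl H); lia. Qed.

Lemma greedy_Tsep d r L : (length (greedy d r L) <= Tsep d L r)%nat.
Proof.
  unfold Tsep. apply (fold_max_ge (@length pt)). apply filter_In. split.
  apply greedy_sub. apply greedy_sep.
Qed.

Lemma choose_seq (P : nat -> nat -> Prop) :
  (forall k N, exists n, (N <= n)%nat /\ P k n) ->
  exists g : nat -> nat, (forall k, P k (g k)) /\ (forall k, (g k < g (S k))%nat).
Proof.
  intros H. pose (X := fun k N => constructive_indefinite_description _ (H k N)).
  exists (fix g k := match k with O => proj1_sig (X O O) | S k => proj1_sig (X (S k) (S (g k))) end).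
  assert (HX : forall k N, (N <= proj1_sig (X k N))%nat /\ P k (proj1_sig (X k N))) by (intros; exact (proj2_sig (X k N))).
  split; intros k; destruct k; simpl.
  - apply HX.
  - apply HX.
  - apply HX.
  - apply HX.
Qed.

Lemma mono_lt (g : nat -> nat) : (forall k, (g k < g (S k))%nat) -> forall a b, (a < b)%nat -> (g a < g b)%nat.
Proof. intros H a b Hab. induction Hab; auto. specialize (H m); lia. Qed.

Lemma sum_step (h : nat -> R) m1 m2 : (forall n, 0 <= h n) -> (m1 < m2)%nat ->
  sum_f_R0 h m1 + h m2 <= sum_f_R0 h m2.
Proof.
  intros Hh H. induction H; simpl; [lra|]. pose proof (Hh m). lra.
Qed.

Lemma Rabs_le_inv' a r : Rabs a <= r -> - r <= a <= r.
Proof. unfold Rabs; destruct Rcase_abs; intros; lra. Qed.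

Lemma droot_eq d s (Rr : R) : (0 < d)%nat -> 0 < s -> 0 < Rr ->
  droot d (s ^ d / Rr) = s * Rpower Rr (- (1 / INR d)).
Proof.
  intros Hd Hs HR. unfold droot. assert (0 < s ^ d / Rr) by (apply Rdiv_lt_0_compat; auto; apply pow_lt; auto).
  destruct Rle_dec; [lra|]. unfold Rpower. unfold Rdiv.
  rewrite ln_mult, ln_Rinv, ln_pow; auto; [|apply pow_lt; auto|apply Rinv_0_lt_compat; auto].
  rewrite <- (exp_ln s) at 2 by auto. rewrite <- exp_plus. f_equal.
  assert (INR d <> 0) by (apply not_0_INR; lia). field; auto.
Qed.

Lemma rho_pow d s (Rr : R) : (0 < d)%nat -> 0 < Rr ->
  (s * Rpower Rr (- (1 / INR d))) ^ d = s ^ d / Rr.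
Proof.
  intros Hd HR. rewrite Rpow_mult_distr. unfold Rdiv. f_equal.
  rewrite <- Rpower_pow by apply exp_pos. unfold Rpower. rewrite ln_exp.
  match goal with |- exp ?a = _ => replace a with (- ln Rr) end.
  rewrite exp_Ropp, exp_ln; auto.
  assert (INR d <> 0) by (apply not_0_INR; lia). field; auto.
Qed.

Lemma geom N : sum_f_R0 (fun k => (/2) ^ k) N = 2 - (/2) ^ N.
Proof. induction N; simpl; [lra|]. rewrite IHN. field. Qed.

Definition bigbox (r : R) (y : pt) : box := (fun i => y i - 2 * r, fun i => y i + 2 * r).
Definition ptbox (y : pt) : box := (y, y).

Lemma volL_big d r L : volL d (map (bigbox r) L) = INR (length L) * (4 * r) ^ d.
Proof.
  induction L; simpl; [ring|]. rewrite IHL. unfold vol. rewrite (prod_upto_const d _ (4*r)).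
  destruct (length L); simpl; ring. intros; simpl; ring.
Qed.

Lemma volL_pt d L : (0 < d)%nat -> volL d (map ptbox L) = 0.
Proof.
  intros Hd. induction L; simpl; auto. rewrite IHL. unfold vol. rewrite (prod_upto_const d _ 0).
  rewrite pow_i; auto; ring. intros; simpl; ring.
Qed.

Theorem mainTheorem14 (d : nat) (Omega : Type) (Rn : nat -> nat)
  (f : nat -> nat -> Omega -> pt) (w : Omega) (s : R) :
  (0 < d)%nat ->
  (forall n, (0 < Rn n)%nat) ->
  0 < s ->
  liminf_zero (fun n =>
    INR (Tsep d (Yn f Rn n w) (s * Rpower (INR (Rn n)) (- (1 / INR d))))
    / INR (Rn n)) ->
  exists h : nat -> R,
    (forall n, 0 <= h n) /\
    series_diverges h /\
    lebesgue_null d (fun x =>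
      forall N, exists n, (N <= n)%nat /\
        exists l, (1 <= l <= Rn n)%nat /\
          ball d (f l n w) (droot d (h n / INR (Rn n))) x).
Proof.
  intros Hd HRn Hs Hlim.
  set (rho := fun n => s * Rpower (INR (Rn n)) (- (1 / INR d))).
  set (u := fun n => INR (Tsep d (Yn f Rn n w) (rho n)) / INR (Rn n)).
  assert (HR : forall n, 0 < INR (Rn n)) by (intros; apply lt_0_INR; auto).
  assert (Hrho : forall n, 0 < rho n) by (intros; unfold rho; apply Rmult_lt_0_compat; auto; apply exp_pos).
  destruct (choose_seq (fun k n => u n < (/2) ^ k)) as [g [Hg Hgm]].
  { intros k N. apply Hlim. apply pow_lt. lra. }
  set (c := s ^ d).
  assert (Hc : 0 < c) by (apply pow_lt; auto).
  set (h := fun n => if excluded_middle_informative (exists k, g k = n) then c else 0).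
  assert (Hh : forall n, 0 <= h n) by (intros; unfold h; destruct excluded_middle_informative; lra).
  assert (Hhg : forall k, h (g k) = c) by (intros; unfold h; destruct excluded_middle_informative as [|n]; [auto|exfalso; apply n; eauto]).
  exists h. split; [exact Hh|split].
  -
    assert (Hsum : forall K, INR (S K) * c <= sum_f_R0 h (g K)).
    { induction K.
      - simpl. rewrite <- (Hhg 0%nat). destruct (g 0%nat); simpl; [lra|].
        pose proof (sum_step h 0 (S n) Hh ltac:(lia)). simpl in H. pose proof (Hh 0%nat). lra.
      - pose proof (sum_step h (g K) (g (S K)) Hh (Hgm K)). rewrite Hhg in H.
        rewrite S_INR. lra. }
    intros M. destruct (INR_unbounded (M / c)) as [K HK].
    exists (g K). eapply Rlt_le_trans; [|apply Hsum]. rewrite S_INR.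
    apply (Rmult_lt_compat_r c) in HK; auto. unfold Rdiv in HK. rewrite Rmult_assoc, Rinv_l in HK by lra. lra.
  -
    intros eps Heps.
    set (A := (4 * s) ^ d).
    assert (HA : 0 < A) by (apply pow_lt; lra).
    destruct (pow_lt_1_zero (/2) ltac:(rewrite Rabs_right; lra) (eps / (2 * A))) as [K HK].
    { apply Rdiv_lt_0_compat; lra. }
    specialize (HK K (le_n K)). rewrite Rabs_right in HK by (apply Rle_ge, pow_le; lra).
    set (B := fun k => map (bigbox (rho (g (K + k)%nat))) (greedy d (rho (g (K + k)%nat)) (Yn f Rn (g (K + k)%nat) w))
                        ++ map ptbox (Yn f Rn k w)).
    apply (cover d B (fun k => A * (/2) ^ (K + k))); auto.
    + intros j b Hb. unfold B in Hb. apply in_app_or in Hb. destruct Hb as [Hb|Hb];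
        apply in_map_iff in Hb; destruct Hb as [y [<- _]]; intros i Hi; simpl.
      * pose proof (Hrho (g (K + j)%nat)); lra.
      * lra.
    + intros k. unfold B. rewrite volL_app, volL_pt, volL_big by auto.
      set (n := g (K + k)%nat).
      pose proof (greedy_Tsep d (rho n) (Yn f Rn n w)) as HT. apply le_INR in HT.
      replace ((4 * rho n) ^ d) with (A / INR (Rn n)).
      * specialize (Hg (K + k)%nat). fold n in Hg. unfold u in Hg.
        apply Rle_trans with (A * (INR (Tsep d (Yn f Rn n w) (rho n)) / INR (Rn n))); [|left; apply Rmult_lt_compat_l; auto].
        rewrite Rplus_0_r. unfold Rdiv.
        match goal with |- INR ?L * _ <= _ => replace (INR L * (A * / INR (Rn n))) with (A * (INR L * / INR (Rn n))) by ring end.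
        apply Rmult_le_compat_l; [lra|]. apply Rmult_le_compat_r; [left; apply Rinv_0_lt_compat; auto| exact HT].
      * unfold A. rewrite !Rpow_mult_distr. unfold rho. rewrite rho_pow; auto. unfold Rdiv. ring.
    + intros N. rewrite (sum_ext _ (fun k => (/2) ^ k * (A * (/2) ^ K))).
      * rewrite <- scal_sum. rewrite geom. pose proof (pow_le (/2) N ltac:(lra)).
        assert (A * (/ 2) ^ K <= eps / 2).
        { apply Rmult_lt_compat_l with (r := 2 * A) in HK; [|lra].
          replace (2 * A * (eps / (2 * A))) with eps in HK by (field; lra). lra. }
        pose proof (Rmult_le_pos A ((/2)^K) ltac:(lra) ltac:(apply pow_le; lra)).
        nra.
      * intros i. rewrite pow_add. ring.
    + intros x Hx. destruct (Hx (g K)) as [n [HnK [l [Hl Hball]]]].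
      assert (Hf : In (f l n w) (Yn f Rn n w)).
      { unfold Yn. apply in_map_iff. exists l. split; auto. apply in_seq. lia. }
      unfold h in Hball. destruct excluded_middle_informative as [[j Hj]|Hn].
      * assert (HjK : (K <= j)%nat).
        { destruct (Nat.le_gt_cases K j); auto. pose proof (mono_lt g Hgm j K H). lia. }
        rewrite <- Hj in Hball, Hf. unfold c in Hball. rewrite droot_eq in Hball by auto.
        fold (rho (g j)) in Hball.
        destruct (greedy_cover d (rho (g j)) _ _ ltac:(left; apply Hrho) Hf) as [y [Hy Hdy]].
        exists (j - K)%nat, (bigbox (rho (g j)) y). replace (K + (j - K))%nat with j by lia. split.
        -- unfold B. apply in_or_app. left. replace (K + (j - K))%nat with j by lia. apply in_map; auto.
        -- intros i Hi. simpl. unfold ball in Hball.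
           apply (dist_coord _ _ _ _ i Hi) in Hball. apply (dist_coord _ _ _ _ i Hi) in Hdy.
           apply Rabs_le_inv' in Hball. apply Rabs_le_inv' in Hdy. lra.
      * unfold Rdiv in Hball. rewrite Rmult_0_l in Hball. unfold droot in Hball.
        destruct Rle_dec; [|lra]. exists n, (ptbox (f l n w)). split.
        -- unfold B. apply in_or_app. right. apply in_map; auto.
        -- intros i Hi. simpl. unfold ball in Hball.
           apply (dist_coord _ _ _ _ i Hi) in Hball. apply Rabs_le_inv' in Hball. lra.
Qed.
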